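(* In the single-block Spice setting, suppose that for every $k\ge1$ the scaling factor satisfies $$\eta_k\ \ge\ \max\Big\{\eta_{k-1}\sqrt{\tfrac{\mathsf{R}(x^k)}{\mathsf{R}(x^{k-1})}},\ \ \eta_{k-1}\,\tfrac{\mathsf{R}(\bar x^k)\sqrt{\mathsf{R}(x^{k-1})}}{\mathsf{R}(\bar x^{k-1})\sqrt{\mathsf{R}(x^k)}}\Big\}.$$ Then (i) $r_k\le r_{k-1}$, $s_k\le s_{k-1}$, hence $H_k\preceq H_{k-1}$ for all $k\ge1$; and (ii) if $w^*\in\Omega$ satisfies $\rho[f(x)-f(x^* )]+(w-w^* )^\top\frac{1}{\eta_j}\Gamma(w^* )\ge0$ for all $w\in\Omega$ and all $j=0,\dots,k$, then $\|w^{k+1}-w^*\|_{H_{k+1}}^2\le\|w^0-w^*\|_{H_0}^2$.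
   Context: Single-block Spice setting. Let $\mathcal{X}\subseteq\mathbb{R}^n$ be nonempty closed convex, $f:\mathbb{R}^n\to\mathbb{R}$ convex, $\phi_1,\dots,\phi_p:\mathbb{R}^n\to\mathbb{R}$ convex and continuously differentiable, $\Phi(x)=(\phi_1(x),\dots,\phi_p(x))^\top$, $\mathcal{D}\Phi(x)\in\mathbb{R}^{p\times n}$ its Jacobian. Let $\mathcal{Z}=\mathbb{R}^p_+$, $\Omega=\mathcal{X}\times\mathcal{Z}$, $w=(x,\lambda)$, $\Gamma(w)=(\mathcal{D}\Phi(x)^\top\lambda,\,-\Phi(x))$. For a symmetric matrix $A$, $\|v\|_A^2:=v^\top A v$; the norm of a matrix is the spectral norm; $\mathsf{R}(x):=\|\mathcal{D}\Phi(x)\|^2$. The scaled Lagrangian is $\mathcal{L}(x,\lambda,\rho,\eta)=\rho f(x)+\frac1\eta\lambda^\top\Phi(x)$. Fix $\rho>0$, $\mu>1$, a starting point $w^0=(x^0,\lambda^0)\in\Omega$ and positive numbers $\eta_0,\eta_1,\dots$. Given $w^k=(x^k,\lambda^k)\in\Omega$, iteration $k$ is: $r_k=\frac{1}{\eta_k}\sqrt{\mathsf{R}(x^k)}$; $\bar x^k=\arg\min_{x\in\mathcal{X}}\{\mathcal{L}(x,\lambda^k,\rho,\eta_k)+\frac{r_k}{2}\|x-x^k\|^2\}$; $s_k=\frac{\mu\,\mathsf{R}(\bar x^k)}{\eta_k\sqrt{\mathsf{R}(x^k)}}$; $\bar\lambda^k=\arg\max_{\lambda\in\mathcal{Z}}\{\mathcal{L}(\bar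 x^k,\lambda,\rho,\eta_k)-\frac{s_k}{2}\|\lambda-\lambda^k\|^2\}$ (equivalently $\bar\lambda^k=\max\{\lambda^k+\frac{1}{\eta_k s_k}\Phi(\bar x^k),0\}$ componentwise); $\bar w^k=(\bar x^k,\bar\lambda^k)$; and $w^{k+1}=w^k-M_k(w^k-\bar w^k)$ where $M_k=\begin{pmatrix}I_n & -\frac{1}{\eta_k r_k}\mathcal{D}\Phi(\bar x^k)^\top\\ 0 & I_p\end{pmatrix}$. It is assumed throughout that $\mathsf{R}(x^k)>0$ and $\mathsf{R}(\bar x^k)>0$ for all $k$. Define $Q_k=\begin{pmatrix} r_kI_n & -\frac{1}{\eta_k}\mathcal{D}\Phi(\bar x^k)^\top\\ 0 & s_kI_p\end{pmatrix}$, $H_k=\begin{pmatrix} r_kI_n&0\\0&s_kI_p\end{pmatrix}$, $G_k=\begin{pmatrix} r_kI_n&0\\0&s_kI_p-\frac{1}{\eta_k^2r_k}\mathcal{D}\Phi(\bar x^k)\mathcal{D}\Phi(\bar x^k)^\top\end{pmatrix}$. *)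

(* Defs.v *)
From HB Require Import structures.
From mathcomp Require Import all_boot all_order all_algebra.
From mathcomp Require Import all_classical all_reals all_analysis.
Set Implicit Arguments. Unset Strict Implicit. Unset Printing Implicit Defensive.
Import Order.TTheory GRing.Theory Num.Theory.
Import numFieldNormedType.Exports.
Local Open Scope classical_set_scope.
Local Open Scope ring_scope.

Section SpiceDefs.
Variable R : realType.

Definition sqnorm m (v : 'cV[R]_m) : R := (v^T *m v) 0 0.
Definition enorm m (v : 'cV[R]_m) : R := Num.sqrt (sqnorm v).
Definition anorm2 m (A : 'M[R]_m) (v : 'cV[R]_m) : R := (v^T *m A *m v) 0 0.
Definition specnorm p n (A : 'M[R]_(p, n)) : R :=
  sup [set enorm (A *m v) | v in [set v : 'cV[R]_n | enorm v = 1]].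
(* R(x) := ||D Phi(x)||^2, here as a function of the Jacobian matrix *)
Definition RR p n (A : 'M[R]_(p, n)) : R := specnorm A ^+ 2.

Definition cvx_set n (X : set 'cV[R]_n) : Prop :=
  forall x y t, X x -> X y -> 0 <= t <= 1 -> X (t *: x + (1 - t) *: y).
Definition convex_fun n (g : 'cV[R]_n -> R) : Prop :=
  forall x y t, 0 <= t <= 1 -> g (t *: x + (1 - t) *: y) <= t * g x + (1 - t) * g y.

Definition nonneg_orthant p : set 'cV[R]_p := [set l | forall i, 0 <= l i 0].

Definition lagr n p (f : 'cV[R]_n -> R) (Phi : 'cV[R]_n -> 'cV[R]_p)
  (x : 'cV[R]_n) (lam : 'cV[R]_p) (rho eta : R) : R :=
  rho * f x + eta^-1 * (lam^T *m Phi x) 0 0.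

Definition Gam n p (Phi : 'cV[R]_n -> 'cV[R]_p) (DPhi : 'cV[R]_n -> 'M[R]_(p, n))
  (x : 'cV[R]_n) (lam : 'cV[R]_p) : 'cV[R]_(n + p) :=
  col_mx ((DPhi x)^T *m lam) (- Phi x).

Definition r_k n p (DPhi : 'cV[R]_n -> 'M[R]_(p, n)) (eta : nat -> R)
  (x : nat -> 'cV[R]_n) (k : nat) : R :=
  (eta k)^-1 * Num.sqrt (RR (DPhi (x k))).
Definition s_k n p (DPhi : 'cV[R]_n -> 'M[R]_(p, n)) (mu : R) (eta : nat -> R)
  (x xb : nat -> 'cV[R]_n) (k : nat) : R :=
  mu * RR (DPhi (xb k)) / (eta k * Num.sqrt (RR (DPhi (x k)))).

Definition H_k n p (DPhi : 'cV[R]_n -> 'M[R]_(p, n)) (mu : R) (eta : nat -> R)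
  (x xb : nat -> 'cV[R]_n) (k : nat) : 'M[R]_(n + p) :=
  block_mx ((r_k DPhi eta x k)%:M) 0 0 ((s_k DPhi mu eta x xb k)%:M).

Definition M_k n p (DPhi : 'cV[R]_n -> 'M[R]_(p, n)) (eta : nat -> R)
  (x xb : nat -> 'cV[R]_n) (k : nat) : 'M[R]_(n + p) :=
  block_mx 1%:M (- ((eta k * r_k DPhi eta x k)^-1 *: (DPhi (xb k))^T)) 0 1%:M.

Definition loewner_le m (A B : 'M[R]_m) : Prop :=
  forall v : 'cV[R]_m, anorm2 A v <= anorm2 B v.

End SpiceDefs.

(* Main.v *)
Require Import Defs.
From HB Require Import structures.
From mathcomp Require Import all_boot all_order all_algebra.
From mathcomp Require Import all_classical all_reals all_analysis.
From mathcomp Require Import ring lra.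
Import Order.TTheory GRing.Theory Num.Theory.
Import numFieldNormedType.Exports.
Local Open Scope classical_set_scope.
Local Open Scope ring_scope.
Set Implicit Arguments. Unset Strict Implicit. Unset Printing Implicit Defensive.

Section Aux.
Variable R : realType.

Definition dot m (u v : 'cV[R]_m) : R := (u^T *m v) 0 0.

Lemma dotE m (u v : 'cV[R]_m) : dot u v = \sum_i u i 0 * v i 0.
Proof. by rewrite /dot mxE; apply: eq_bigr => i _; rewrite mxE. Qed.

Lemma dotC m (u v : 'cV[R]_m) : dot u v = dot v u.
Proof. by rewrite !dotE; apply: eq_bigr => i _; rewrite mulrC. Qed.

Lemma dotDl m (u v w : 'cV[R]_m) : dot (u + v) w = dot u w + dot v w.
Proof. by rewrite !dotE -big_split; apply: eq_bigr => i _; rewrite mxE mulrDl. Qed.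

Lemma dotNl m (u w : 'cV[R]_m) : dot (- u) w = - dot u w.
Proof. by rewrite !dotE -sumrN; apply: eq_bigr => i _; rewrite mxE mulNr. Qed.

Lemma dotZl m a (u w : 'cV[R]_m) : dot (a *: u) w = a * dot u w.
Proof. by rewrite !dotE mulr_sumr; apply: eq_bigr => i _; rewrite mxE mulrA. Qed.

Lemma dotBl m (u v w : 'cV[R]_m) : dot (u - v) w = dot u w - dot v w.
Proof. by rewrite dotDl dotNl. Qed.

Lemma dotDr m (u v w : 'cV[R]_m) : dot w (u + v) = dot w u + dot w v.
Proof. by rewrite dotC dotDl !(dotC w). Qed.
Lemma dotNr m (u w : 'cV[R]_m) : dot w (- u) = - dot w u.
Proof. by rewrite dotC dotNl dotC. Qed.
Lemma dotZr m a (u w : 'cV[R]_m) : dot w (a *: u) = a * dot w u.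
Proof. by rewrite dotC dotZl dotC. Qed.
Lemma dotBr m (u v w : 'cV[R]_m) : dot w (u - v) = dot w u - dot w v.
Proof. by rewrite dotDr dotNr. Qed.

Lemma dot_sq m (u v : 'cV[R]_m) : dot (u + v) (u + v) = dot u u + 2 * dot u v + dot v v.
Proof. rewrite dotDl !dotDr (dotC v u); ring. Qed.

Lemma dot_mulmx m k (A : 'M[R]_(m, k)) u v : dot u (A *m v) = dot (A^T *m u) v.
Proof. by rewrite /dot trmx_mul trmxK mulmxA. Qed.

Lemma dot_ge0 m (u : 'cV[R]_m) : 0 <= dot u u.
Proof. by rewrite dotE; apply: sumr_ge0 => i _; rewrite -expr2 sqr_ge0. Qed.

Lemma dot_le m (l u v : 'cV[R]_m) : (forall i, 0 <= l i 0) -> (forall i, u i 0 <= v i 0) ->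
  dot l u <= dot l v.
Proof. by move=> hl huv; rewrite !dotE; apply: ler_sum => i _; apply: ler_wpM2l. Qed.

Lemma anorm2_block n p (r s : R) (a : 'cV[R]_n) (b : 'cV[R]_p) :
  anorm2 (block_mx r%:M 0 0 s%:M) (col_mx a b) = r * dot a a + s * dot b b.
Proof.
rewrite /anorm2 tr_col_mx mul_row_block !mulmx0 addr0 add0r !mul_mx_scalar.
rewrite mul_row_col -!scalemxAl !mxE.
by rewrite /dot !mxE.
Qed.


Lemma core_sc (r c s rho fs fb L EQ EA Gb GB M Gs Ls Lb Sb Ss E Q A B G : R) :
  0 <= r*c -> 0 <= r -> 0 <= A ->
  r * c^+2 * Q <= s * B ->
  0 <= rho*(fs - fb) - r*c*(L + EQ) + r*EA ->
  - (r*c)*Gb - s*GB <= 0 ->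
  0 <= rho*(fb-fs) + r*c*(M - Gs) ->
  -L <= Ls - Lb -> M <= Sb - Ss -> Gs = Ls - Ss -> Gb = Lb - Sb ->
  r*(E + 2*c*EQ + c^+2*Q) + s*G <= r*(E + 2*EA + A) + s*(G + 2*GB + B).
Proof.
move=> rc0 r0 A0 SB P Dl VI G1 G2 eGs eGb.
have F1 : (r*c)*(M - L) <= (r*c)*(Gs - Gb).
  by apply: ler_wpM2l => //; rewrite eGs eGb; lra.
have F2 : 0 <= r * A by apply: mulr_ge0.
lra.
Qed.

Lemma core_vec n p (e a : 'cV[R]_n) (b g lamb ls Phib Phis : 'cV[R]_p)
  (D Ds : 'M[R]_(p, n)) (fb fs rho r s c : R) :
  0 <= r * c -> 0 <= r ->
  r * c^+2 * dot (D^T *m b) (D^T *m b) <= s * dot b b ->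
  0 <= rho * (fs - fb) + r * c * dot (lamb + b) (D *m (- e)) + r * dot (- e) (- a) ->
  r * c * dot (- g) Phib - s * dot (- g) (- b) <= 0 ->
  0 <= rho * (fb - fs) + r * c * (dot e (Ds^T *m ls) - dot g Phis) ->
  dot lamb (D *m (- e)) <= dot lamb (Phis - Phib) ->
  dot ls (Ds *m e) <= dot ls (Phib - Phis) ->
  g = lamb - ls ->
  r * dot (e + c *: (D^T *m b)) (e + c *: (D^T *m b)) + s * dot g g
  <= r * dot (e + a) (e + a) + s * dot (g + b) (g + b).
Proof.
move=> rc0 r0 SB P Dl VI G1 G2 hg.
have hgs : dot g Phis = dot lamb Phis - dot ls Phis by rewrite hg dotBl.
have hgb : dot g Phib = dot lamb Phib - dot ls Phib by rewrite hg dotBl.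
rewrite mulmxN !dotNr !dotNl opprK dotDl [dot b _]dot_mulmx in P.
rewrite !dotNr !dotNl opprK in Dl.
rewrite dot_mulmx trmxK (dotC _ ls) in VI.
rewrite mulmxN dotNr !dotBr in G1.
rewrite !dotBr in G2.
rewrite !(dotDl, dotDr, dotZl, dotZr) (dotC a e) (dotC b g) (dotC (D^T *m b) e).
have A0 := dot_ge0 a.
have F1 : (r*c)*(dot ls (Ds*m e) - dot lamb (D*m e)) <= (r*c)*(dot g Phis - dot g Phib).
  by apply: ler_wpM2l => //; rewrite hgs hgb; lra.
have F2 : 0 <= r * dot a a by apply: mulr_ge0.
rewrite (dotC _ e) in P.
lra.
Qed.

Lemma entry_le_norm m k (M : 'M[R]_(m, k)) i j : `|M i j| <= `|M|.
Proof.
have -> : `|M| = mx_norm M by [].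
rewrite mx_normrE; apply/bigmax_geP; right => /=.
by exists (i, j).
Qed.

Lemma cvg_entry T (F : set_system T) {FF : Filter F} m k (g : T -> 'M[R]_(m, k)) (L : 'M[R]_(m, k)) i j :
  g @ F --> L -> (fun t => g t i j) @ F --> L i j.
Proof.
move=> /cvgrPdist_lt H; apply/cvgrPdist_lt => e e0.
move: (H e e0); apply: filterS => t Ht.
apply: le_lt_trans Ht.
have -> : L i j - g t i j = (L - g t) i j by rewrite !mxE.
exact: entry_le_norm.
Qed.

Lemma right_sub : (0:R)^'+ --> (0:R)^'.
Proof.
move=> A /nbhs_ballP [_ /posnumP[e] xe_A].
by exists e%:num => //= y xe_y; rewrite lt_def => /andP [xney _]; apply: xe_A.
Qed.

Lemma lim_nonneg (h : R -> R) l : h x @[x --> 0^'+] --> l ->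
  (forall t, 0 < t <= 1 -> 0 <= h t) -> 0 <= l.
Proof.
move=> hl hp; apply: (cvgr_to_ge hl).
near=> t; apply: hp; apply/andP; split; near: t; first exact: nbhs_right_gt.
exact: nbhs_right_le.
Unshelve. all: by end_near. Qed.

Lemma dir_deriv n p (Phi : 'cV[R]_n -> 'cV[R]_p) (DPhi : 'cV[R]_n -> 'M[R]_(p, n)) y d :
  differentiable Phi y -> 'd Phi y d = DPhi y *m d ->
  (fun t : R => t^-1 *: (Phi (t *: d + y) - Phi y)) @ 0^'+ --> DPhi y *m d.
Proof.
move=> hd hj; rewrite -hj -deriveE //.
apply: cvg_trans (cvg_app _ right_sub) _.
have := diff_derivable (v:=d) hd; rewrite /derivable => H. exact: H.
Qed.

Lemma cvg_dot T (F : set_system T) {FF : Filter F} m (l : 'cV[R]_m)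
  (G : T -> 'cV[R]_m) (L : 'cV[R]_m) :
  G @ F --> L -> (fun t => dot l (G t)) @ F --> dot l L.
Proof.
move=> hG; rewrite dotE; under eq_cvg do rewrite dotE.
apply: (@cvg_big R 'I_m +%R 0 xpredT _ _ _ _ (fun i t => l i 0 * G t i 0) (fun i => l i 0 * L i 0)).
all: try exact: add_continuous.
move=> i _; apply: cvgM; first exact: cvg_cst.
exact: cvg_entry.
Qed.

Lemma grad_ineq n p (Phi : 'cV[R]_n -> 'cV[R]_p) (DPhi : 'cV[R]_n -> 'M[R]_(p, n)) y z i :
  (forall i : 'I_p, convex_fun (fun y => Phi y i 0)) ->
  differentiable Phi y -> (forall v, 'd Phi y v = DPhi y *m v) ->
  (DPhi y *m (z - y)) i 0 <= Phi z i 0 - Phi y i 0.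
Proof.
move=> hphi hd hj.
have H := cvg_entry (i:=i) (j:=0) (dir_deriv hd (hj (z - y))).
rewrite -subr_ge0.
apply: (@lim_nonneg (fun t => (Phi z i 0 - Phi y i 0)
   - (t^-1 *: (Phi (t *: (z - y) + y) - Phi y)) i 0)).
  by apply: (cvgB (cvg_cst _) (H _)).
move=> t /andP[t0 t1].
have -> : t *: (z - y) + y = t *: z + (1 - t) *: y.
  by apply/matrixP => a b; rewrite !mxE; ring.
have hc := hphi i z y t; rewrite /= in hc.
have hc' : Phi (t *: z + (1 - t) *: y) i 0 - Phi y i 0 <= t * (Phi z i 0 - Phi y i 0).
  by have := hc; rewrite (ltW t0) t1 /= => /(_ isT) hc2; lra.
have := ler_wpM2l (ltW (ltac:(by rewrite invr_gt0) : 0 < t^-1)) hc'; rewrite mulKf ?gt_eqF // => h.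
by rewrite !mxE; lra.
Qed.

Lemma right_id0 : (fun t : R => t) @ (0:R)^'+ --> (0:R).
Proof. exact: (cvg_at_right_filter cvg_id). Qed.

Lemma foc n p (X : set 'cV[R]_n) (f : 'cV[R]_n -> R) (Phi : 'cV[R]_n -> 'cV[R]_p)
  (DPhi : 'cV[R]_n -> 'M[R]_(p, n)) (lam : 'cV[R]_p) (x xb : 'cV[R]_n) (rho ei r : R) :
  cvx_set X -> convex_fun f ->
  differentiable Phi xb -> (forall v, 'd Phi xb v = DPhi xb *m v) ->
  0 <= rho -> 
  (forall y, X y -> rho * f xb + ei * dot lam (Phi xb) + r / 2 * dot (xb - x) (xb - x)
                 <= rho * f y + ei * dot lam (Phi y) + r / 2 * dot (y - x) (y - x)) ->
  X xb ->
  forall y, X y ->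
  0 <= rho * (f y - f xb) + ei * dot lam (DPhi xb *m (y - xb)) + r * dot (y - xb) (xb - x).
Proof.
move=> hX hf hd hj rho0 hmin hXb y hy.
set d := y - xb.
pose K := rho * (f y - f xb) + r * dot d (xb - x).
have HL := cvg_dot (l:=lam) (dir_deriv hd (hj d)).
have Hlim : (fun t => K + ei * dot lam (t^-1 *: (Phi (t *: d + xb) - Phi xb))
                     + (r / 2 * dot d d) * t) @ 0^'+ -->
            K + ei * dot lam (DPhi xb *m d) + (r / 2 * dot d d) * 0.
  apply: cvgD; first by apply: cvgD; [exact: cvg_cst | apply: cvgM; [exact: cvg_cst| exact: HL]].
  by apply: cvgM; [exact: cvg_cst | exact: right_id0].
have := lim_nonneg Hlim.
rewrite mulr0 addr0 /K => H; suff : 0 <= rho * (f y - f xb) + r * dot d (xb - x)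
   + ei * dot lam (DPhi xb *m d) by lra.
apply: H => t /andP[t0 t1].
have eyt : t *: d + xb = t *: y + (1 - t) *: xb.
  by apply/matrixP => a b; rewrite !mxE; ring.
have Xyt : X (t *: d + xb) by rewrite eyt; apply: hX => //; rewrite (ltW t0) t1.
have hm := hmin _ Xyt.
have hfc : rho * f (t *: d + xb) <= rho * (t * f y + (1 - t) * f xb).
  by rewrite eyt; apply: ler_wpM2l => //; apply: hf; rewrite (ltW t0) t1.
have e1 : t *: d + xb - x = (xb - x) + t *: d.
  by apply/matrixP => a b; rewrite !mxE; ring.
rewrite e1 (dot_sq (xb - x) (t *: d)) !dotZl !dotZr in hm.
set W := dot lam (Phi (t *: d + xb)) - dot lam (Phi xb).
have hW : - (t * (rho * (f y - f xb) + r * dot (xb - x) d + r / 2 * t * dot d d)) <= ei * W.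
  rewrite /W; lra.
have tV0 : 0 <= t^-1 by rewrite invr_ge0 ltW.
have := ler_wpM2l tV0 hW.
rewrite mulrN mulKf ?gt_eqF // => hW2.
rewrite dotZr (dotBr _ _ lam) -/W mulrCA (dotC d (xb - x)).
lra.
Qed.

Lemma sqnormE m (v : 'cV[R]_m) : sqnorm v = dot v v.
Proof. by []. Qed.

Lemma enorm_sq m (v : 'cV[R]_m) : enorm v ^+ 2 = dot v v.
Proof. by rewrite /enorm sqr_sqrtr // dot_ge0. Qed.

Lemma entry_sq_le m (v : 'cV[R]_m) j : v j 0 ^+ 2 <= dot v v.
Proof.
rewrite dotE (bigD1 j) //= -expr2 lerDl.
by apply: sumr_ge0 => i _; rewrite -expr2 sqr_ge0.
Qed.

Lemma specnorm_bound p n (A : 'M[R]_(p, n)) (z : 'cV[R]_n) :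
  enorm (A *m z) <= specnorm A * enorm z.
Proof.
have [z0|zn0] := eqVneq (dot z z) 0.
  have -> : z = 0.
    apply/matrixP => i j; rewrite ord1 mxE; apply/eqP.
    by rewrite -sqrf_eq0 eq_le sqr_ge0 andbT -z0 entry_sq_le.
  by rewrite mulmx0 /enorm /sqnorm !mulmx0 mxE sqrtr0 mulr0.
have zz0 : 0 < dot z z by rewrite lt0r zn0 dot_ge0.
have en0 : 0 < enorm z by rewrite sqrtr_gt0.
set v := (enorm z)^-1 *: z.
have hv : enorm v = 1.
  rewrite /enorm /sqnorm -/(dot v v) /v dotZl dotZr mulrA -expr2 exprVn enorm_sq.
  by rewrite mulVf ?sqrtr1 // gt_eqF.
pose S := [set enorm (A *m v) | v in [set v : 'cV[R]_n | enorm v = 1]].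
have hub : has_ubound S.
  exists (Num.sqrt (\sum_i (\sum_j `|A i j|) ^+ 2)).
  move=> _ [w /= hw <-]; rewrite /enorm ler_sqrt; last first.
    by apply: sumr_ge0 => i _; rewrite sqr_ge0.
  have ww : dot w w = 1 by rewrite -enorm_sq hw expr1n.
  rewrite /sqnorm -/(dot _ _) dotE; apply: ler_sum => i _.
  have wj : forall j, `|w j 0| <= 1.
    move=> j; have := entry_sq_le w j; rewrite ww -(real_normK (num_real (w j 0))).
    by have := normr_ge0 (w j 0); nra.
  have hi : `|(A *m w) i 0| <= \sum_j `|A i j|.
    rewrite mxE; apply: le_trans (ler_norm_sum _ _ _) _; apply: ler_sum => j _.
    by rewrite normrM ler_piMr.
  rewrite -expr2 -(real_normK (num_real ((A *m w) i 0))).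
  by have := normr_ge0 ((A *m w) i 0); nra.
have Sv : S (enorm (A *m v)) by exists v.
have := sup_upper_bound (conj (ex_intro _ _ Sv) hub) Sv.
rewrite -/(specnorm A).
have -> : enorm (A *m v) = (enorm z)^-1 * enorm (A *m z).
  rewrite /v -scalemxAr /enorm /sqnorm -!/(dot _ _) dotZl dotZr mulrA -expr2.
  by rewrite sqrtrM ?sqr_ge0 // sqrtr_sqr ger0_norm // invr_ge0 ltW.
by rewrite ler_pdivrMl // mulrC.
Qed.

Lemma specnormT_bound p n (A : 'M[R]_(p, n)) (u : 'cV[R]_p) :
  0 < RR A -> dot (A^T *m u) (A^T *m u) <= RR A * dot u u.
Proof.
move=> hR.
set z := A^T *m u.
set S2 := RR A.
have hP : dot (A *m z) (A *m z) <= S2 * dot z z.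
  have h := specnorm_bound A z.
  have h0 : 0 <= enorm (A *m z) by apply: sqrtr_ge0.
  rewrite -!enorm_sq /S2 /RR -exprMn.
  by apply: lerXn2r => //; rewrite ?nnegrE //; apply: le_trans h.
have hZ : dot z z = dot u (A *m z) by rewrite dot_mulmx.
have h0 := dot_ge0 (S2 *: u - A *m z).
rewrite dotBl !dotBr !dotZl !dotZr (dotC (A *m z) u) in h0.
have hZ0 := dot_ge0 z.
have : S2 * dot z z <= S2 * (S2 * dot u u) by nra.
by rewrite ler_pM2l.
Qed.

Lemma dual_vi p (lamb lam0 Phib : 'cV[R]_p) (c0 ei s : R) :
  0 <= s -> nonneg_orthant lamb ->
  (forall l, nonneg_orthant l ->
     c0 + ei * dot l Phib - s / 2 * dot (l - lam0) (l - lam0)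
     <= c0 + ei * dot lamb Phib - s / 2 * dot (lamb - lam0) (lamb - lam0)) ->
  forall l, nonneg_orthant l ->
  ei * dot (l - lamb) Phib - s * dot (l - lamb) (lamb - lam0) <= 0.
Proof.
move=> s0 hlb hmax l hl.
set dl := l - lamb.
set A := ei * dot dl Phib - s * dot dl (lamb - lam0).
suff : 0 <= - A by lra.
have Hlim : (fun t : R => s / 2 * dot dl dl * t - A) @ 0^'+ --> s / 2 * dot dl dl * 0 - A.
  by apply: cvgB; [apply: cvgM; [exact: cvg_cst | exact: right_id0] | exact: cvg_cst].
have := lim_nonneg Hlim; rewrite mulr0 add0r; apply => t /andP[t0 t1].
have hlt : nonneg_orthant (lamb + t *: dl).
  move=> i; rewrite /dl !mxE.
  have := hlb i; have := hl i; nra.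
have hm := hmax _ hlt.
have e1 : lamb + t *: dl - lam0 = (lamb - lam0) + t *: dl.
  by apply/matrixP => a b; rewrite !mxE; ring.
rewrite e1 (dot_sq (lamb - lam0) (t *: dl)) !dotZl !dotZr dotDl dotZl in hm.
have : t * A <= t * (s / 2 * dot dl dl * t).
  rewrite /A (dotC dl (lamb - lam0)); lra.
rewrite ler_pM2l // => h; lra.
Qed.

Lemma r_dec (e0 e1 R0 R1 : R) : 0 < e0 -> 0 < e1 -> 0 < R0 -> 0 < R1 ->
  e0 * Num.sqrt (R1 / R0) <= e1 -> e1^-1 * Num.sqrt R1 <= e0^-1 * Num.sqrt R0.
Proof.
move=> h0 h1 hR0 hR1.
rewrite sqrtrM; last exact: ltW. rewrite sqrtrV; last exact: ltW.
have a0 : 0 < Num.sqrt R0 by rewrite sqrtr_gt0.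
have a1 : 0 < Num.sqrt R1 by rewrite sqrtr_gt0.
move: (Num.sqrt R0) (Num.sqrt R1) a0 a1 => b0 b1 b00 b10 h.
have -> : e1^-1 * b1 = e0 * (b1 / b0) * (e0^-1 * b0 * e1^-1).
  by field; rewrite !gt_eqF.
apply: le_trans (ler_wpM2r _ h) _.
  by rewrite !mulr_ge0 ?invr_ge0 ?ltW.
have -> : e1 * (e0^-1 * b0 * e1^-1) = e0^-1 * b0 by field; rewrite !gt_eqF.
by [].
Qed.

Lemma s_dec (mu e0 e1 R0 R1 B0 B1 : R) : 0 < mu -> 0 < e0 -> 0 < e1 -> 0 < R0 -> 0 < R1 ->
  0 < B0 -> 0 < B1 ->
  e0 * (B1 * Num.sqrt R0) / (B0 * Num.sqrt R1) <= e1 ->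
  mu * B1 / (e1 * Num.sqrt R1) <= mu * B0 / (e0 * Num.sqrt R0).
Proof.
move=> hm h0 h1 hR0 hR1 hB0 hB1.
have a0 : 0 < Num.sqrt R0 by rewrite sqrtr_gt0.
have a1 : 0 < Num.sqrt R1 by rewrite sqrtr_gt0.
move: (Num.sqrt R0) (Num.sqrt R1) a0 a1 => b0 b1 b00 b10 h.
have -> : mu * B1 / (e1 * b1) = e0 * (B1 * b0) / (B0 * b1) * (mu * B0 / (e0 * b0) / e1).
  by field; rewrite !gt_eqF.
apply: le_trans (ler_wpM2r _ h) _.
  by rewrite !(mulr_ge0, invr_ge0) ?ltW.
have -> : e1 * (mu * B0 / (e0 * b0) / e1) = mu * B0 / (e0 * b0) by field; rewrite !gt_eqF.
by [].
Qed.

Lemma col_sub m k (a c : 'cV[R]_m) (b d : 'cV[R]_k) :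
  col_mx a b - col_mx c d = col_mx (a - c) (b - d).
Proof. by rewrite opp_col_mx add_col_mx. Qed.

Lemma dot_col m k (a c : 'cV[R]_m) (b d : 'cV[R]_k) :
  ((col_mx a b)^T *m col_mx c d) 0 0 = dot a c + dot b d.
Proof. by rewrite tr_col_mx mul_row_col mxE. Qed.

Lemma vec_id1 m (u v w : 'cV[R]_m) : u - (u - v + - w) = v + w.
Proof. by apply/matrixP => i j; rewrite !mxE; ring. Qed.
Lemma vec_id2 m (a b c : 'cV[R]_m) : a - c = (b - c) + (a - b).
Proof. by apply/matrixP => i j; rewrite !mxE; ring. Qed.
Lemma vec_id3 m (a b c : 'cV[R]_m) : b + a - c = (b - c) + a.
Proof. by apply/matrixP => i j; rewrite !mxE; ring. Qed.

Lemma rc_id (r e a : R) : e != 0 -> a != 0 -> r = e^-1 * a ->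
  r * (e * r)^-1 = e^-1 /\ r * ((e * r)^-1) ^+ 2 = (e * a)^-1.
Proof. by move=> he ha ->; split; field; rewrite ?he ?ha ?mulf_neq0. Qed.

Lemma le_rw (a b c d : R) : a = c -> b = d -> c <= d -> a <= b.
Proof. by move=> -> ->. Qed.

Lemma anorm2_H n p (DPhi : 'cV[R]_n -> 'M[R]_(p, n)) mu eta (x xb : nat -> 'cV[R]_n) k
  (a : 'cV[R]_n) (b : 'cV[R]_p) :
  anorm2 (H_k DPhi mu eta x xb k) (col_mx a b)
  = r_k DPhi eta x k * dot a a + s_k DPhi mu eta x xb k * dot b b.
Proof. exact: anorm2_block. Qed.

Lemma loewner_H n p (DPhi : 'cV[R]_n -> 'M[R]_(p, n)) mu eta (x xb : nat -> 'cV[R]_n) k1 k0 :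
  r_k DPhi eta x k1 <= r_k DPhi eta x k0 ->
  s_k DPhi mu eta x xb k1 <= s_k DPhi mu eta x xb k0 ->
  loewner_le (H_k DPhi mu eta x xb k1) (H_k DPhi mu eta x xb k0).
Proof.
move=> hr hs v.
have e1 := anorm2_H DPhi mu eta x xb k1 (usubmx v) (dsubmx v).
have e0 := anorm2_H DPhi mu eta x xb k0 (usubmx v) (dsubmx v).
rewrite vsubmxK in e1 e0; apply: (le_rw e1 e0).
by apply: lerD; apply: ler_wpM2r => //; exact: dot_ge0.
Qed.

End Aux.

Theorem lemma3p3 (R : realType) (n p : nat)
  (X : set 'cV[R]_n) (f : 'cV[R]_n -> R)
  (Phi : 'cV[R]_n -> 'cV[R]_p) (DPhi : 'cV[R]_n -> 'M[R]_(p, n))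
  (rho mu : R) (eta : nat -> R)
  (x xb : nat -> 'cV[R]_n) (lam lamb : nat -> 'cV[R]_p)
  (* X nonempty closed convex *)
  (hXne : X !=set0) (hXcl : closed X) (hXcv : cvx_set X)
  (* f convex *)
  (hf : convex_fun f)
  (* each phi_i convex and continuously differentiable, with Jacobian DPhi *)
  (hphi : forall i : 'I_p, convex_fun (fun y => Phi y i 0))
  (hdiff : forall y : 'cV[R]_n, differentiable Phi y)
  (hjac : forall (y v : 'cV[R]_n), 'd Phi y v = DPhi y *m v)
  (hDc : continuous DPhi)
  (* parameters *)
  (hrho : 0 < rho) (hmu : 1 < mu) (heta : forall k, 0 < eta k)
  (* standing assumptions R(x^k) > 0, R(xb^k) > 0 *)
  (hRx : forall k, 0 < RR (DPhi (x k)))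
  (hRxb : forall k, 0 < RR (DPhi (xb k)))
  (* the iterates lie in Omega = X x R^p_+ *)
  (hxX : forall k, X (x k)) (hlZ : forall k, nonneg_orthant (lam k))
  (* primal step: xb^k = argmin_{x in X} L(x,lam^k,rho,eta_k) + r_k/2 ||x - x^k||^2 *)
  (hxb : forall k, X (xb k) /\
     forall y, X y ->
       lagr f Phi (xb k) (lam k) rho (eta k)
         + r_k DPhi eta x k / 2 * sqnorm (xb k - x k)
       <= lagr f Phi y (lam k) rho (eta k)
         + r_k DPhi eta x k / 2 * sqnorm (y - x k))
  (* dual step: lamb^k = argmax_{lam in Z} L(xb^k,lam,rho,eta_k) - s_k/2 ||lam - lam^k||^2 *)
  (hlb : forall k, nonneg_orthant (lamb k) /\
     forall l, nonneg_orthant l ->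
       lagr f Phi (xb k) l rho (eta k)
         - s_k DPhi mu eta x xb k / 2 * sqnorm (l - lam k)
       <= lagr f Phi (xb k) (lamb k) rho (eta k)
         - s_k DPhi mu eta x xb k / 2 * sqnorm (lamb k - lam k))
  (* correction step: w^{k+1} = w^k - M_k (w^k - wb^k) *)
  (hupd : forall k, col_mx (x k.+1) (lam k.+1)
     = col_mx (x k) (lam k)
       - M_k DPhi eta x xb k *m (col_mx (x k) (lam k) - col_mx (xb k) (lamb k)))
  (* scaling factor rule, for every k >= 1 *)
  (hetak : forall k,
     Num.max (eta k * Num.sqrt (RR (DPhi (x k.+1)) / RR (DPhi (x k))))
             (eta k * (RR (DPhi (xb k.+1)) * Num.sqrt (RR (DPhi (x k))))
                    / (RR (DPhi (xb k)) * Num.sqrt (RR (DPhi (x k.+1)))))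
     <= eta k.+1) :
  (* (i) *)
  (forall k,
     r_k DPhi eta x k.+1 <= r_k DPhi eta x k /\
     s_k DPhi mu eta x xb k.+1 <= s_k DPhi mu eta x xb k /\
     loewner_le (H_k DPhi mu eta x xb k.+1) (H_k DPhi mu eta x xb k)) /\
  (* (ii) *)
  (forall (xs : 'cV[R]_n) (ls : 'cV[R]_p) (k : nat),
     X xs -> nonneg_orthant ls ->
     (forall j, (j <= k)%N ->
        forall (y : 'cV[R]_n) (l : 'cV[R]_p), X y -> nonneg_orthant l ->
          0 <= rho * (f y - f xs)
               + ((col_mx y l - col_mx xs ls)^T
                  *m ((eta j)^-1 *: Gam Phi DPhi xs ls)) 0 0) ->
     anorm2 (H_k DPhi mu eta x xb k.+1) (col_mx (x k.+1) (lam k.+1) - col_mx xs ls)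
     <= anorm2 (H_k DPhi mu eta x xb 0) (col_mx (x 0) (lam 0) - col_mx xs ls)).
Proof.
have hsq k : 0 < Num.sqrt (RR (DPhi (x k))) by rewrite sqrtr_gt0.
have mu0 : 0 < mu by apply: lt_trans hmu.
have hr0 k : 0 < r_k DPhi eta x k by have := hsq k; have := heta k => *; rewrite /r_k mulr_gt0 ?invr_gt0.
have hs0 k : 0 < s_k DPhi mu eta x xb k.
  have := hsq k; have := hRxb k; have := heta k => *; rewrite /s_k; apply: divr_gt0; exact: mulr_gt0.
have partI : forall k,
     r_k DPhi eta x k.+1 <= r_k DPhi eta x k /\
     s_k DPhi mu eta x xb k.+1 <= s_k DPhi mu eta x xb k /\
     loewner_le (H_k DPhi mu eta x xb k.+1) (H_k DPhi mu eta x xb k).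
  move=> k; have := hetak k; rewrite ge_max => /andP[h1 h2].
  have hr : r_k DPhi eta x k.+1 <= r_k DPhi eta x k.
    exact: (r_dec (heta k) (heta k.+1) (hRx k) (hRx k.+1) h1).
  have hs : s_k DPhi mu eta x xb k.+1 <= s_k DPhi mu eta x xb k.
    exact: (s_dec mu0 (heta k) (heta k.+1) (hRx k) (hRx k.+1) (hRxb k) (hRxb k.+1) h2).
  split; first exact: hr.
  split; first exact: hs.
  exact: loewner_H.
split; first exact: partI.
move=> xs ls k hxs hls hVI.
pose VI j := forall (y : 'cV[R]_n) (l : 'cV[R]_p), X y -> nonneg_orthant l ->
          0 <= rho * (f y - f xs)
               + ((col_mx y l - col_mx xs ls)^T
                  *m ((eta j)^-1 *: Gam Phi DPhi xs ls)) 0 0.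
have step : forall j, VI j ->
   anorm2 (H_k DPhi mu eta x xb j) (col_mx (x j.+1) (lam j.+1) - col_mx xs ls)
   <= anorm2 (H_k DPhi mu eta x xb j) (col_mx (x j) (lam j) - col_mx xs ls).
  move=> j hvi.
  have [hxbX hxbmin] := hxb j.
  have [hlbZ hlbmax] := hlb j.
  have hu := hupd j.
  rewrite (col_sub (x j)) /M_k mul_block_col !mul1mx mul0mx add0r mulNmx -scalemxAl col_sub in hu.
  have [hx1 hl1] := eq_col_mx hu.
  rewrite vec_id1 in hx1.
  rewrite opprB addrC subrK in hl1.
  rewrite hx1 hl1 !col_sub /H_k !anorm2_block.
  rewrite vec_id3 (vec_id2 (x j) (xb j) xs) (vec_id2 (lam j) (lamb j) ls).
  set r := r_k DPhi eta x j.
  set s := s_k DPhi mu eta x xb j.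
  set c := (eta j * r)^-1.
  have etan0 : eta j != 0 by rewrite gt_eqF.
  have sqn0 : Num.sqrt (RR (DPhi (x j))) != 0 by rewrite gt_eqF.
  have [hrc hrc2] := rc_id etan0 sqn0 (erefl r).
  apply: (core_vec (fb := f (xb j)) (fs := f xs) (rho := rho) (Phib := Phi (xb j))
     (Phis := Phi xs) (Ds := DPhi xs) (lamb := lamb j) (ls := ls)).
  - by rewrite hrc invr_ge0 ltW.
  - exact: ltW (hr0 j).
  - rewrite hrc2 /s /s_k.
    set K := (eta j * Num.sqrt (RR (DPhi (x j))))^-1.
    have K0 : 0 < K by rewrite invr_gt0 mulr_gt0.
    have hQ := specnormT_bound (lam j - lamb j) (hRxb j).
    have h1 := ler_wpM2l (ltW K0) hQ.
    have hB := dot_ge0 (lam j - lamb j).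
    have h2 : 0 <= (mu - 1) * (RR (DPhi (xb j)) * K * dot (lam j - lamb j) (lam j - lamb j)).
      apply: mulr_ge0; first by rewrite subr_ge0 ltW.
      apply: mulr_ge0 => //; apply: mulr_ge0; [exact: ltW (hRxb j) | exact: ltW K0].
    lra.
  - rewrite hrc !opprB [lamb j + _]addrC subrK.
    exact: (foc hXcv hf (hdiff (xb j)) (hjac (xb j)) (ltW hrho) hxbmin hxbX hxs).
  - rewrite hrc !opprB.
    exact: (dual_vi (c0 := rho * f (xb j)) (ltW (hs0 j)) hlbZ hlbmax hls).
  - have := hvi (xb j) (lamb j) hxbX hlbZ.
    rewrite col_sub /Gam scale_col_mx dot_col !dotZr dotNr hrc.
    lra.
  - rewrite opprB; apply: dot_le => // i.
    apply: le_trans (grad_ineq xs i hphi (hdiff (xb j)) (hjac (xb j))) _.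
    by rewrite !mxE.
  - apply: dot_le => // i.
    apply: le_trans (grad_ineq (xb j) i hphi (hdiff xs) (hjac xs)) _.
    by rewrite !mxE.
  - by [].
have claim : forall k, (forall j, (j < k)%N -> VI j) ->
   anorm2 (H_k DPhi mu eta x xb k) (col_mx (x k) (lam k) - col_mx xs ls)
   <= anorm2 (H_k DPhi mu eta x xb 0) (col_mx (x 0) (lam 0) - col_mx xs ls).
  elim=> [|m IH] hv //.
  apply: le_trans; first exact: ((partI m).2.2 _).
  apply: le_trans (step m (hv m (ltnSn m))) _.
  by apply: IH => j hj; apply: hv; apply: ltnW.
by apply: claim => j hj; apply: hVI.
Qed.
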